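(* Let $\Delta=\Delta(n)$ satisfy $\Delta\ge 3$ and $\Delta=o(n^{1/2})$. Any algorithm that, given a vertex set $V$ with $|V|=n$ and a distance oracle for an unknown connected graph $G=(V,E)$ of maximum degree at most $\Delta$, always outputs $E$, must make $\Omega(\Delta n\log n/\log\log n)$ distance queries on some such graph $G$.
   Context: A distance oracle for $G$ receives a pair $(u,v)\in V^2$ and returns the number of edges on a shortest path between $u$ and $v$ in $G$. Graphs are unweighted, undirected and simple. *)

(* Defs.v *)
From Stdlib Require Import Reals Arith List Bool.
Import ListNotations.

Definition simple_graph (n : nat) (adj : nat -> nat -> bool) : Prop :=
  (forall u v, adj u v = adj v u) /\
  (forall u, adj u u = false) /\
  (forall u v, adj u v = true -> u < n /\ v < n).

Definition degree (n : nat) (adj : nat -> nat -> bool) (v : nat) : nat :=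
  length (filter (fun u => adj v u) (seq 0 n)).

Definition max_degree_le (n : nat) (adj : nat -> nat -> bool) (D : nat) : Prop :=
  forall v, v < n -> degree n adj v <= D.

Fixpoint is_walk (adj : nat -> nat -> bool) (u : nat) (p : list nat) (v : nat) : Prop :=
  match p with
  | [] => u = v
  | w :: p' => adj u w = true /\ is_walk adj w p' v
  end.

Definition connected (n : nat) (adj : nat -> nat -> bool) : Prop :=
  forall u v, u < n -> v < n -> exists p, is_walk adj u p v.

Fixpoint reach (n : nat) (adj : nat -> nat -> bool) (k : nat) (u v : nat) : bool :=
  match k with
  | 0 => Nat.eqb u v
  | S k' => reach n adj k' u v
            || existsb (fun w => reach n adj k' u w && adj w v) (seq 0 n)
  end.

(* least k <= n with reach k u v (returns n if none such, which never
   happens for u, v in a connected graph). *)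
Fixpoint first_reach (n : nat) (adj : nat -> nat -> bool) (u v : nat) (k fuel : nat) : nat :=
  match fuel with
  | 0 => k
  | S f => if reach n adj k u v then k else first_reach n adj u v (S k) f
  end.

Definition dist_oracle (n : nat) (adj : nat -> nat -> bool) (u v : nat) : nat :=
  first_reach n adj u v 0 n.

(* A (deterministic, adaptive) query algorithm as a decision tree: either
   output an edge relation, or query the oracle on a pair (u,v) and continue
   depending on the answer. *)
Inductive algo : Type :=
| Out : (nat -> nat -> bool) -> algo
| Ask : nat -> nat -> (nat -> algo) -> algo.

Fixpoint run_output (A : algo) (oracle : nat -> nat -> nat) : nat -> nat -> bool :=
  match A with
  | Out f => f
  | Ask u v k => run_output (k (oracle u v)) oracle
  end.

Fixpoint run_cost (A : algo) (oracle : nat -> nat -> nat) : nat :=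
  match A with
  | Out _ => 0
  | Ask u v k => S (run_cost (k (oracle u v)) oracle)
  end.

Definition admissible (n D : nat) (adj : nat -> nat -> bool) : Prop :=
  simple_graph n adj /\ connected n adj /\ max_degree_le n adj D.

Definition reconstructs (n D : nat) (A : algo) : Prop :=
  forall adj, admissible n D adj ->
    forall u v, u < n -> v < n -> run_output A (dist_oracle n adj) u v = adj u v.

(* Main.v *)
Require Import Defs.
From Stdlib Require Import Reals Arith List.
From Stdlib Require Import Lia Lra Bool.
Import ListNotations.

Definition adj_bounded n (adj : nat -> nat -> bool) :=
  forall u v, adj u v = true -> u < n /\ v < n.

Lemma reach_S n adj k u v : reach n adj (S k) u v =
  reach n adj k u v || existsb (fun w => reach n adj k u w && adj w v) (seq 0 n).
Proof. reflexivity. Qed.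

Lemma reach_bounds n adj (Hb : adj_bounded n adj) k : forall u v,
  reach n adj k u v = true -> u = v \/ (u < n /\ v < n).
Proof.
  induction k as [|k IH]; intros u v H.
  - left; apply Nat.eqb_eq; exact H.
  - rewrite reach_S in H.
    apply orb_true_iff in H as [H|H]; [now apply IH|].
    apply existsb_exists in H as [w [Hw H]].
    apply in_seq in Hw. apply andb_true_iff in H as [H1 H2].
    destruct (Hb _ _ H2) as [_ Hv].
    destruct (IH _ _ H1) as [->|[Hu _]]; right; lia.
Qed.

Lemma first_reach_le n adj u v K : reach n adj K u v = true ->
  forall fuel k, k <= K -> first_reach n adj u v k fuel <= K.
Proof.
  intros HK fuel; induction fuel as [|f IH]; intros k Hk; simpl; [lia|].
  destruct (reach n adj k u v) eqn:E; [lia|].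
  apply IH. destruct (Nat.eq_dec k K) as [->|]; [congruence|lia].
Qed.

Lemma first_reach_none n adj u v : (forall k, reach n adj k u v = false) ->
  forall fuel k, first_reach n adj u v k fuel = k + fuel.
Proof.
  intros H fuel; induction fuel as [|f IH]; intros k; simpl; [lia|].
  rewrite H, IH; lia.
Qed.

Lemma reach_front n adj u w v k : u < n -> adj u w = true ->
  reach n adj k w v = true -> reach n adj (S k) u v = true.
Proof.
  intros Hu Huw; revert v; induction k as [|k IH]; intros v H.
  - simpl in H. apply Nat.eqb_eq in H; subst v. rewrite reach_S.
    apply orb_true_iff; right.
    apply existsb_exists; exists u; split; [apply in_seq; lia|].
    simpl; rewrite Nat.eqb_refl; simpl; exact Huw.
  - rewrite reach_S in H. rewrite reach_S.
    apply orb_true_iff in H as [H|H].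
    + apply orb_true_iff; left. exact (IH _ H).
    + apply orb_true_iff; right.
      apply existsb_exists in H as [x [Hx H]].
      apply andb_true_iff in H as [H1 H2].
      apply existsb_exists; exists x; split; [exact Hx|].
      rewrite (IH _ H1); exact H2.
Qed.

Lemma reach_le n adj k K u v : k <= K -> reach n adj k u v = true -> reach n adj K u v = true.
Proof.
  intros Hk H; induction Hk; [exact H|].
  rewrite reach_S, IHHk; reflexivity.
Qed.

Lemma walk_reach n adj (Hb : adj_bounded n adj) p : forall u v, u < n ->
  is_walk adj u p v -> reach n adj (length p) u v = true.
Proof.
  induction p as [|w p IH]; simpl; intros u v Hu H.
  - subst; apply Nat.eqb_refl.
  - destruct H as [H1 H2]. eapply reach_front; eauto.
    apply IH; auto. apply (Hb _ _ H1).
Qed.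

Lemma walk_app adj p q u w v : is_walk adj u p w -> is_walk adj w q v ->
  is_walk adj u (p ++ q) v.
Proof.
  revert u; induction p as [|a p IH]; simpl; intros u H1 H2.
  - subst; exact H2.
  - destruct H1; split; eauto.
Qed.

Lemma walk_rev adj (Hs : forall a b, adj a b = adj b a) p : forall u v,
  is_walk adj u p v -> exists q, length q = length p /\ is_walk adj v q u.
Proof.
  induction p as [|w p IH]; simpl; intros u v H.
  - subst; exists []; simpl; auto.
  - destruct H as [H1 H2]. destruct (IH _ _ H2) as [q [Hl Hq]].
    exists (q ++ [u]); split; [rewrite length_app; simpl; lia|].
    eapply walk_app; [exact Hq|]. simpl; split; [rewrite Hs; exact H1|reflexivity].
Qed.

Lemma dist_le n adj (Hb : adj_bounded n adj) u v p : u < n ->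
  is_walk adj u p v -> dist_oracle n adj u v <= length p.
Proof.
  intros Hu H; unfold dist_oracle. apply first_reach_le; [|lia].
  apply walk_reach; auto.
Qed.

Lemma dist_range n adj (Hb : adj_bounded n adj) u v :
  (u < n /\ v < n) \/ dist_oracle n adj u v = 0 \/ dist_oracle n adj u v = n.
Proof.
  destruct (Nat.eq_dec u v) as [->|Huv].
  - right; left. unfold dist_oracle. destruct n; simpl; [reflexivity|].
    rewrite Nat.eqb_refl; reflexivity.
  - destruct (Nat.lt_ge_cases u n); destruct (Nat.lt_ge_cases v n); try (left; lia);
    right; right; unfold dist_oracle; rewrite first_reach_none; try lia;
    intros k; destruct (reach n adj k u v) eqn:E; auto;
    destruct (reach_bounds n adj Hb k u v E); lia.
Qed.


Module G.
From mathcomp Require Import all_boot fingroup perm zify.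
Set Implicit Arguments. Unset Strict Implicit. Unset Printing Implicit Defensive.

Section Graph.
Variables (n j' b : nat).
Local Notation j := j'.+1.
Local Notation B := b.+1.
Hypothesis Hfit : n %/ 2 + 2 * (j * B) <= n.

Definition o := n %/ 2.
Definition lpos (s : 'I_j) (x : 'I_B) : nat := o + s * B + x.
Definition rpos (t : 'I_j) (y : 'I_B) : nat := o + j * B + t * B + y.
Definition hE u v := (0 < v) && (v < n) && (u == v.-1 %/ 2).
Definition bE (p : {ffun 'I_j * 'I_j -> {perm 'I_B}}) u v :=
  [exists st : 'I_j * 'I_j, exists x : 'I_B,
      (u == lpos st.1 x) && (v == rpos st.2 (p st x))].
Definition gadj p u v := [|| hE u v, hE v u, bE p u v | bE p v u].

Lemma lpos_ge s x : o <= lpos s x. Proof. rewrite /lpos; lia. Qed.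
Lemma lpos_lt s x : lpos s x < o + j * B.
Proof. rewrite /lpos. have := ltn_ord s; have := ltn_ord x. nia. Qed.
Lemma rpos_ge t y : o + j * B <= rpos t y. Proof. rewrite /rpos; lia. Qed.
Lemma rpos_lt t y : rpos t y < n.
Proof. move: Hfit; rewrite /rpos /o. have := ltn_ord t; have := ltn_ord y. nia. Qed.
Lemma lpos_lt_n s x : lpos s x < n.
Proof. have := lpos_lt s x; move: Hfit; rewrite /o; lia. Qed.

Lemma lpos_inj s x s' x' : lpos s x = lpos s' x' -> s = s' /\ x = x'.
Proof.
  rewrite /lpos => H.
  have Hs : (s : nat) = s' by have := ltn_ord x; have := ltn_ord x'; nia.
  split; apply: val_inj => /=; [exact Hs|]. move: H; rewrite Hs; lia.
Qed.
Lemma rpos_inj s x s' x' : rpos s x = rpos s' x' -> s = s' /\ x = x'.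
Proof.
  rewrite /rpos => H.
  have Hs : (s : nat) = s' by have := ltn_ord x; have := ltn_ord x'; nia.
  split; apply: val_inj => /=; [exact Hs|]. move: H; rewrite Hs; lia.
Qed.

Lemma hE_bound u v : hE u v -> u < n /\ v < n.
Proof. rewrite /hE => /andP[/andP[H1 H2] /eqP->]; split; lia. Qed.

Lemma bE_bound p u v : bE p u v -> u < n /\ v < n.
Proof.
  move=> /existsP[st /existsP[x /andP[/eqP-> /eqP->]]].
  split; [exact: lpos_lt_n | exact: rpos_lt].
Qed.

Lemma gadj_sym p u v : gadj p u v = gadj p v u.
Proof. rewrite /gadj; by case: (hE u v); case: (hE v u); case: (bE p u v); case: (bE p v u). Qed.

Lemma bE_irr p u : bE p u u = false.
Proof.
  apply/negbTE/negP => /existsP[st /existsP[x /andP[/eqP H1 /eqP H2]]].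
  have := lpos_lt st.1 x; have := rpos_ge st.2 (p st x). rewrite -H1 -H2. lia.
Qed.

Lemma hE_irr u : hE u u = false.
Proof. apply/negbTE/negP; rewrite /hE => /andP[/andP[H1 H2] /eqP H]. lia. Qed.

Lemma gadj_simple p : simple_graph n (gadj p).
Proof.
  split; [exact: gadj_sym|split].
  - move=> u; by rewrite /gadj hE_irr bE_irr.
  - move=> u v; rewrite /gadj => /orP[/hE_bound|/orP[/hE_bound|/orP[/bE_bound|/bE_bound]]];
    case=> H1 H2; split; apply/ltP; done.
Qed.

Lemma gadj_bounded p : adj_bounded n (gadj p).
Proof. move=> u v H; have [_ [_ H3]] := gadj_simple p; exact: H3. Qed.

Lemma to_root p k : forall u, u < n -> u.+1 < Nat.pow 2 k.+1 ->
  exists q, (length q <= k) /\ is_walk (gadj p) u q 0.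
Proof.
  elim: k => [|k IH] u Hu Hk.
  - exists nil; split => //=. move: Hk => /=. lia.
  - case: (posnP u) => [->|Hu0]; first by exists nil.
    have [q [Hq Hw]] := IH (u.-1 %/ 2) ltac:(lia) ltac:(move: Hk => /=; lia).
    exists (u.-1 %/ 2 :: q); split => /=; first lia.
    split => //. rewrite /gadj; apply/orP; right; apply/orP; left.
    rewrite /hE Hu0 Hu /=. by [].
Qed.

Lemma length_filter_seq (f : nat -> bool) a m :
  length (List.filter f (List.seq a m)) = count f (iota a m).
Proof. elim: m a => [|m IH] a //=. case: (f a) => /=; by rewrite IH. Qed.

Definition T1 v := [set z : ('I_j * 'I_j) * 'I_B | lpos z.1.1 z.2 == v].
Definition T2 (p : {ffun 'I_j * 'I_j -> {perm 'I_B}}) v :=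
  [set z : ('I_j * 'I_j) * 'I_B | rpos z.1.2 (p z.1 z.2) == v].
Definition cand (p : {ffun 'I_j * 'I_j -> {perm 'I_B}}) v : seq nat := if v < o then [:: v.-1 %/ 2; v.*2.+1; v.*2.+2]
  else v.-1 %/ 2 :: [seq rpos z.1.2 (p z.1 z.2) | z <- enum (T1 v)] ++
                    [seq lpos z.1.1 z.2 | z <- enum (T2 p v)].

Lemma cand_sub p v w : w < n -> gadj p v w -> w \in cand p v.
Proof.
  move=> Hw; rewrite /gadj /cand => /orP[H|/orP[H|/orP[H|H]]].
  - move: H; rewrite /hE => /andP[/andP[H1 H2] /eqP H3].
    case: ifP => Hv.
    + rewrite !inE; apply/orP; right.
      have [E|E] : w = v.*2.+1 \/ w = v.*2.+2 by lia.
      * by rewrite E eqxx.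
      * by rewrite E eqxx orbT.
    + exfalso; move: Hv => /negbT; rewrite -leqNgt /o; lia.
  - move: H => /andP[_ /eqP ->]; case: ifP => _; by rewrite inE eqxx.
  - move: H => /existsP[st /existsP[x /andP[/eqP Hv /eqP Hw']]].
    have Hvo : (v < o) = false by apply/negbTE; rewrite -leqNgt Hv lpos_ge.
    rewrite Hvo inE mem_cat; apply/orP; right; apply/orP; left.
    rewrite Hw'. apply/mapP; exists (st, x) => //.
    by rewrite mem_enum inE /= Hv eqxx.
  - move: H => /existsP[st /existsP[x /andP[/eqP Hw' /eqP Hv]]].
    have Hvo : (v < o) = false.
      apply/negbTE; rewrite -leqNgt Hv. exact: leq_trans (leq_addr _ _) (rpos_ge _ _).
    rewrite Hvo inE mem_cat; apply/orP; right; apply/orP; right.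
    rewrite Hw'. apply/mapP; exists (st, x) => //.
    by rewrite mem_enum inE /= Hv eqxx.
Qed.

Lemma card_T1 v : #|T1 v| <= j.
Proof.
  rewrite -(@card_in_imset _ _ (fun z : ('I_j * 'I_j) * 'I_B => z.1.2)).
  - by apply: leq_trans (max_card _) _; rewrite card_ord.
  - move=> [[s t] x] [[s' t'] x']; rewrite !inE /= => /eqP H /eqP H' Ht.
    have [Hs Hx] := lpos_inj (etrans H (esym H')). by rewrite Hs Hx Ht.
Qed.

Lemma card_T2 p v : #|T2 p v| <= j.
Proof.
  rewrite -(@card_in_imset _ _ (fun z : ('I_j * 'I_j) * 'I_B => z.1.1)).
  - by apply: leq_trans (max_card _) _; rewrite card_ord.
  - move=> [[s t] x] [[s' t'] x']; rewrite !inE /= => /eqP H /eqP H' Hs.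
    have [Ht Hx] := rpos_inj (etrans H (esym H')). subst s' t'.
    have Hxx := perm_inj Hx. by rewrite Hxx.
Qed.

Lemma T_disj p v : #|T1 v| = 0 \/ #|T2 p v| = 0.
Proof.
  case: (set_0Vmem (T1 v)) => [->|[z Hz]]; [left; apply: cards0|right].
  apply/eqP; rewrite cards_eq0; apply/eqP/setP => z'; rewrite !inE.
  apply/negbTE/negP => /eqP H. move: Hz; rewrite inE => /eqP H'.
  have := lpos_lt z.1.1 z.2; have := rpos_ge z'.1.2 (p z'.1 z'.2). rewrite H H' => A1 A2. by have := leq_ltn_trans A1 A2; rewrite ltnn.
Qed.

Lemma size_cand p v : size (cand p v) <= maxn 3 j.+1.
Proof.
  rewrite /cand; case: ifP => _ /=; first by rewrite leq_maxl.
  rewrite size_cat !size_map -!cardE.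
  have := card_T1 v; have := card_T2 p v; have := T_disj p v. lia.
Qed.

Lemma gadj_deg p v : degree n (gadj p) v <= maxn 3 j.+1.
Proof.
  rewrite /degree length_filter_seq -size_filter.
  apply: leq_trans (size_cand p v).
  apply: uniq_leq_size; first exact: filter_uniq (iota_uniq 0 n).
  move=> w; rewrite mem_filter mem_iota add0n => /andP[H1 H2].
  exact: cand_sub.
Qed.

Lemma gadj_dist p K u v : u < n -> v < n -> n < Nat.pow 2 K.+1 ->
  dist_oracle n (gadj p) u v <= K + K.
Proof.
  move=> Hu Hv HK.
  have [q1 [H1 W1]] := to_root p Hu (ltac:(lia) : u.+1 < Nat.pow 2 K.+1).
  have [q2 [H2 W2]] := to_root p Hv (ltac:(lia) : v.+1 < Nat.pow 2 K.+1).
  have [q3 [H3 W3]] := walk_rev (gadj p) (gadj_sym p) _ _ _ W2.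
  have := dist_le n (gadj p) (@gadj_bounded p) _ _ _ (ltP Hu) (walk_app _ _ _ _ _ _ W1 W3).
  rewrite length_app. lia.
Qed.

Lemma gadj_conn p : connected n (gadj p).
Proof.
  move=> u v /ltP Hu /ltP Hv.
  have n0 : (0 < n)%coq_nat by lia.
  have [_ HK] := Nat.log2_spec n n0.
  have [q1 [H1 W1]] := to_root p Hu (ltac:(lia) : u.+1 < Nat.pow 2 (Nat.log2 n).+1).
  have [q2 [H2 W2]] := to_root p Hv (ltac:(lia) : v.+1 < Nat.pow 2 (Nat.log2 n).+1).
  have [q3 [H3 W3]] := walk_rev (gadj p) (gadj_sym p) _ _ _ W2.
  exists (q1 ++ q3); exact: walk_app _ _ _ _ _ _ W1 W3.
Qed.

Lemma gadj_admissible p : 1 <= j' -> admissible n j.+1 (gadj p).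
Proof.
  move=> Hj; split; [exact: gadj_simple|split; [exact: gadj_conn|]].
  move=> v _; apply/leP; apply: leq_trans (gadj_deg p v) _. lia.
Qed.

Lemma gadj_ans p K u v : n < Nat.pow 2 K.+1 ->
  dist_oracle n (gadj p) u v \in rcons (iota 0 (K + K).+1) n.
Proof.
  move=> HK; rewrite mem_rcons inE mem_iota add0n.
  case: (dist_range n (gadj p) (@gadj_bounded p) u v) => [[/ltP Hu /ltP Hv]|[->|->]].
  - have := gadj_dist p Hu Hv HK; lia.
  - by rewrite orbT.
  - by rewrite eqxx.
Qed.

End Graph.
End G.


Module C.
From mathcomp Require Import all_boot fingroup perm zify.
Set Implicit Arguments. Unset Strict Implicit. Unset Printing Implicit Defensive.
Import G.

Lemma count_tree (X : finType) (n : nat) (g : X -> nat -> nat -> bool)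
  (orc : X -> nat -> nat -> nat) (S : seq nat)
  (Hinj : forall x y, x != y -> exists u v, (u < n) && (v < n) && (g x u v != g y u v))
  (HS : forall x u v, orc x u v \in S) (HS0 : 0 < size S) :
  forall q A (P : {set X}), (forall x, x \in P -> run_cost A (orc x) < q /\
      forall u v, u < n -> v < n -> run_output A (orc x) u v = g x u v) ->
  #|P| <= (size S) ^ q.
Proof.
  elim=> [|q IH] A P H.
  - case: (set_0Vmem P) => [->|[x Hx]]; first by rewrite cards0.
    by have [] := H x Hx.
  - case: A H => [f|u v k] H.
    + apply: leq_trans (_ : 1 <= _); last by rewrite expn_gt0 HS0.
      apply/card_le1_eqP => x y Hx Hy.
      apply/eqP/negPn/negP => Hne.
      have [a [c /andP[/andP[Ha Hc] Hd]]] := Hinj _ _ Hne.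
      have [_ E1] := H x Hx; have [_ E2] := H y Hy.
      move: (E1 a c Ha Hc) (E2 a c Ha Hc) => /= E1' E2'.
      by move: Hd; rewrite -E1' -E2' eqxx.
    + have Hsub : forall S' : seq nat,
        #|[set x in P | orc x u v \in S']| <= size S' * (size S) ^ q.
        elim=> [|a S' IHS].
        * rewrite mul0n leqn0 cards_eq0; apply/eqP/setP => x; by rewrite !inE andbF.
        * apply: leq_trans (_ : #|[set x in P | orc x u v == a] :|:
                                 [set x in P | orc x u v \in S']| <= _).
            apply: subset_leq_card; apply/subsetP => x; rewrite !inE.
            by case/andP=> -> /=; case/orP=> ->; rewrite ?orbT.
          apply: leq_trans (leq_card_setU _ _) _.
          rewrite /= mulSn leq_add //.
          apply: IH (k a) _ _ => x; rewrite inE => /andP[Hx /eqP Ha].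
          have [Hc Ho] := H x Hx. move: Hc Ho => /=; rewrite Ha => Hc Ho.
          split => //.
      have E : P = [set x in P | orc x u v \in S].
        apply/setP => x; by rewrite !inE HS andbT.
      by rewrite E expnS; apply: leq_trans (Hsub S) _; rewrite mulnC.
Qed.

Lemma gadj_inj n j' b (Hfit : n %/ 2 + 2 * (j'.+1 * b.+1) <= n)
  (p p' : {ffun 'I_j'.+1 * 'I_j'.+1 -> {perm 'I_b.+1}}) : p != p' ->
  exists u v, (u < n) && (v < n) && (gadj n p u v != gadj n p' u v).
Proof.
  move=> Hne.
  case: (pickP (fun st => p st != p' st)) => [st Hst|H]; last first.
    move: Hne; have -> : p = p' by apply/ffunP => st; apply/eqP/negbFE; exact: H.
    by rewrite eqxx.
  case: (pickP (fun x => p st x != p' st x)) => [x Hx|H]; last first.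
    move: Hst; have -> : p st = p' st by apply/permP => x; apply/eqP/negbFE; exact: H.
    by rewrite eqxx.
  have L1 := lpos_lt Hfit st.1 x; have L2 := lpos_ge Hfit st.1 x.
  have R1 := rpos_ge Hfit st.2 (p st x); have R2 := rpos_lt Hfit st.2 (p st x).
  have L3 := lpos_lt_n Hfit st.1 x.
  exists (lpos n st.1 x), (rpos n st.2 (p st x)).
  rewrite L3 R2 /=.
  have T : gadj n p (lpos n st.1 x) (rpos n st.2 (p st x)) = true.
    rewrite /gadj; apply/orP; right; apply/orP; right; apply/orP; left.
    apply/existsP; exists st; apply/existsP; exists x; by rewrite !eqxx.
  have F : gadj n p' (lpos n st.1 x) (rpos n st.2 (p st x)) = false.
    rewrite /gadj; apply/negbTE; rewrite !negb_or; apply/and4P; split.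
    - rewrite /hE; apply/negP => /andP[_ /eqP E]. move: L2 R2; rewrite /o E; lia.
    - rewrite /hE; apply/negP => /andP[_ /eqP E]. move: L1 R1; rewrite E.
      move: (o n + j'.+1 * b.+1) => m. lia.
    - apply/negP => /existsP[st' /existsP[x' /andP[/eqP E1 /eqP E2]]].
      have [Hs Hxx] := lpos_inj Hfit E1. have [Ht Hy] := rpos_inj Hfit E2.
      have Est : st = st' by move: Hs Ht; case: st {Hst Hx T L1 L2 R1 R2 L3 E1 E2 Hy} => a c; case: st' => a' c' /= -> ->.
      by move: Hx; rewrite Hy Est Hxx eqxx.
    - apply/negP => /existsP[st' /existsP[x' /andP[/eqP E1 /eqP E2]]].
      have := lpos_lt Hfit st'.1 x'. move: L1 R1; rewrite -E1.
      move: (o n + j'.+1 * b.+1) => m. lia.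
  by rewrite T F.
Qed.

Lemma fact_lb h k : h ^ k * h`! <= (h + k)`!.
Proof.
  elim: k => [|k IH]; first by rewrite expn0 mul1n addn0.
  rewrite addnS factS expnS -mulnA. apply: leq_mul; [lia|exact IH].
Qed.

Lemma fact_mono m k : m`! <= (m + k)`!.
Proof.
  elim: k => [|k IH]; first by rewrite addn0.
  rewrite addnS factS; apply: leq_trans IH _; apply: leq_pmull; lia.
Qed.

Lemma powE a k : Nat.pow a k = a ^ k.
Proof. elim: k => [|k IH] //=. by rewrite IH expnS. Qed.

Lemma arith s B j : 0 < s -> 1 < B -> 0 < j ->
  s ^ ((B %/ 2) * j * j * Nat.log2 (B %/ 2) %/ (Nat.log2 s + 1)) < (B`!) ^ (j * j).
Proof.
  move=> Hs HB Hj.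
  set h := B %/ 2.
  have Hh : 0 < h by rewrite /h; lia.
  have Hf : h ^ h <= B`!.
    apply: leq_trans (_ : h ^ h * h`! <= _).
      by rewrite -{1}[h ^ h]muln1 leq_mul2l fact_gt0 orbT.
    apply: leq_trans (fact_lb h h) _.
    have -> : B = (h + h) + (B - (h + h)) by rewrite /h; lia.
    exact: fact_mono.
  set L := Nat.log2 s. set Q := _ %/ _.
  case: (posnP Q) => [->|HQ].
    rewrite expn0. apply: leq_trans (_ : B`! <= _).
      have -> : B = 2 + (B - 2) by lia.
      exact: fact_mono 2 _.
    rewrite -{1}[B`!]expn1. apply: leq_pexp2l; [exact: fact_gt0|nia].
  have [_ HsL] := Nat.log2_spec s (ltP Hs). rewrite powE -/L in HsL.
  have [Hh1 _] := Nat.log2_spec h (ltP Hh). rewrite powE in Hh1.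
  apply: (@leq_trans ((2 ^ L.+1) ^ Q)).
    by rewrite ltn_exp2r //; apply/ltP.
  rewrite -expnM. apply: leq_trans (_ : 2 ^ (Nat.log2 h * (h * j * j)) <= _).
    rewrite leq_exp2l //. have := leq_divM (h * j * j * Nat.log2 h) (L + 1).
    rewrite -/Q. nia.
  rewrite expnM. apply: leq_trans (_ : h ^ (h * j * j) <= _).
    rewrite leq_exp2r; [by apply/leP|nia].
  rewrite -mulnA expnM leq_exp2r //; nia.
Qed.

Definition Qn n D := ((n - n %/ 2) %/ (2 * D.-1)) %/ 2 * D.-1 * D.-1 *
  Nat.log2 (((n - n %/ 2) %/ (2 * D.-1)) %/ 2) %/
  (Nat.log2 (Nat.log2 n + Nat.log2 n).+2 + 1).

Lemma main_nat n D A : 0 < n -> 3 <= D -> 2 <= (n - n %/ 2) %/ (2 * D.-1) ->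
  reconstructs n D A ->
  exists adj, admissible n D adj /\ (Qn n D <= run_cost A (dist_oracle n adj))%coq_nat.
Proof.
  move=> Hn HD HB HA.
  have [j' Ej] : exists j', D = j'.+2 by exists (D - 2); lia.
  subst D. rewrite /Qn /= in HB *.
  set B := (n - n %/ 2) %/ (2 * j'.+1) in HB *.
  have [b Eb] : exists b, B = b.+1 by exists B.-1; lia.
  have Hfit : n %/ 2 + 2 * (j'.+1 * b.+1) <= n.
    have := leq_divM (n - n %/ 2) (2 * j'.+1). rewrite -/B Eb. nia.
  set K := Nat.log2 n.
  have [_ HK] := Nat.log2_spec n (ltP Hn). rewrite -/K in HK.
  have HK' : n < Nat.pow 2 K.+1 by apply/ltP.
  set Q := (B %/ 2 * j'.+1 * j'.+1 * Nat.log2 (B %/ 2) %/ (Nat.log2 (K + K).+2 + 1)).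
  case: (boolP [exists p : {ffun 'I_j'.+1 * 'I_j'.+1 -> {perm 'I_b.+1}},
      Q <= run_cost A (dist_oracle n (gadj n p))]).
  - move/existsP => [p Hp]; exists (gadj n p); split.
    + apply: (gadj_admissible Hfit p). lia.
    + apply/leP. exact: Hp.
  - move/existsPn => Hall. exfalso.
    have Hc := @count_tree _ n (fun p => gadj n p) (fun p => dist_oracle n (gadj n p))
      (rcons (iota 0 (K + K).+1) n) (@gadj_inj n j' b Hfit)
      (fun p u v => gadj_ans Hfit p u v HK') (ltac:(by rewrite size_rcons))
      Q A setT.
    have Hcond : forall p, p \in [set: {ffun 'I_j'.+1 * 'I_j'.+1 -> {perm 'I_b.+1}}] ->
        run_cost A (dist_oracle n (gadj n p)) < Q /\
        forall u v, u < n -> v < n -> run_output A (dist_oracle n (gadj n p)) u v = gadj n p u v.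
      move=> p _; split; first by move: (Hall p); rewrite -ltnNge.
      move=> u v Hu Hv. apply: HA; last by apply/ltP. 2: by apply/ltP.
      apply: (gadj_admissible Hfit p). lia.
    have := Hc Hcond.
    rewrite cardsT card_ffun card_Sn card_prod card_ord size_rcons size_iota.
    have := @arith (K + K).+2 b.+1 j'.+1 ltac:(lia) ltac:(lia) ltac:(lia).
    rewrite -Eb. move=> H1 H2. have := leq_ltn_trans H2 H1. by rewrite ltnn.
Qed.

Lemma main_nat2 n D A : (0 < n)%coq_nat -> (3 <= D)%coq_nat -> reconstructs n D A ->
  exists h L Q,
    (n < 8 * (D - 1) * (h + 1))%coq_nat /\
    L = Nat.log2 (2 * Nat.log2 n + 2)%coq_nat /\
    (Q * (L + 1) <= h * (D - 1) * (D - 1) * Nat.log2 h)%coq_nat /\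
    (h * (D - 1) * (D - 1) * Nat.log2 h < (Q + 1) * (L + 1))%coq_nat /\
    ((1 <= h)%coq_nat -> exists adj, admissible n D adj /\
        (Q <= run_cost A (dist_oracle n adj))%coq_nat).
Proof.
  move=> /ltP Hn /leP HD HA.
  set j := D.-1.
  set Bq := (n - n %/ 2) %/ (2 * j).
  set h := Bq %/ 2.
  set L := Nat.log2 (Nat.log2 n + Nat.log2 n).+2.
  exists h, L, (Qn n D).
  have HL : L = Nat.log2 (2 * Nat.log2 n + 2)%coq_nat by rewrite /L; congr Nat.log2; lia.
  have Hj : D - 1 = j by rewrite /j; lia.
  rewrite Hj.
  have EQ : Qn n D = h * j * j * Nat.log2 h %/ (L + 1) by [].
  split; last split; [|exact HL|split; [|split]].
  - have E1 := divn_eq (n - n %/ 2) (2 * j).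
    have E2 := ltn_pmod (n - n %/ 2) (ltac:(rewrite /j; lia) : 0 < 2 * j).
    have E3 := divn_eq Bq 2.
    have E4 := ltn_pmod Bq (ltac:(lia) : 0 < 2).
    rewrite -/Bq in E1 E2. rewrite -/h in E3.
    move: E1 E2 E3 E4. move: ((n - n %/ 2) %% (2 * j)) (Bq %% 2) => r1 r2.
    move=> E1 E2 E3 E4. apply/ltP.
    have : n <= 2 * (n - n %/ 2) by lia.
    nia.
  - rewrite EQ. apply/leP. rewrite -!/(muln _ _) -!/(addn _ _). exact: leq_divM.
  - rewrite EQ. apply/ltP. rewrite -!/(muln _ _) -!/(addn _ _).
    have := ltn_ceil (h * j * j * Nat.log2 h) (ltac:(lia) : 0 < L + 1). lia.
  - move=> /leP Hh.
    have := main_nat (A := A) Hn (ltac:(lia) : 3 <= D) (ltac:(rewrite -/j -/Bq; lia)) HA.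
    done.
Qed.

End C.


Lemma main_nat3 n D A : (0 < n)%nat -> (3 <= D)%nat -> reconstructs n D A ->
  exists h L Q,
    (n < 8 * (D - 1) * (h + 1))%nat /\
    L = Nat.log2 (2 * Nat.log2 n + 2) /\
    (Q * (L + 1) <= h * (D - 1) * (D - 1) * Nat.log2 h)%nat /\
    (h * (D - 1) * (D - 1) * Nat.log2 h < (Q + 1) * (L + 1))%nat /\
    ((1 <= h)%nat -> exists adj, admissible n D adj /\
        (Q <= run_cost A (dist_oracle n adj))%nat).
Proof. exact (@C.main_nat2 n D A). Qed.

Set Bullet Behavior "Strict Subproofs".
Open Scope R_scope.

Lemma ln_le' a b : 0 < a -> a <= b -> ln a <= ln b.
Proof. intros Ha Hab. destruct (Rle_lt_or_eq_dec _ _ Hab) as [H|H].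
  - left; apply ln_increasing; auto. - subst; lra. Qed.

Lemma ln_lt_self y : 0 < y -> ln y < y.
Proof.
  intros Hy. assert (H := exp_ineq1 y ltac:(lra)).
  rewrite <- (ln_exp y) at 2. apply ln_increasing; lra.
Qed.

Lemma ln2_lt1 : ln 2 < 1.
Proof.
  assert (H := exp_ineq1 1 ltac:(lra)). rewrite <- (ln_exp 1).
  apply ln_increasing; lra.
Qed.

Lemma ln_pow2_le k x : 0 < x -> INR (Nat.pow 2 k) <= x -> INR k * ln 2 <= ln x.
Proof.
  intros Hx H. rewrite pow_INR in H. rewrite <- ln_pow by lra.
  apply ln_le'; [apply pow_lt; simpl; lra| exact H].
Qed.

Lemma ln_pow2_lt k x : 0 < x -> x < INR (Nat.pow 2 (S k)) -> ln x < (INR k + 1) * ln 2.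
Proof.
  intros Hx H. rewrite pow_INR in H. rewrite <- S_INR, <- ln_pow by lra.
  apply ln_increasing; auto.
Qed.

Lemma exp5 : exp 5 <= 1000.
Proof.
  replace 5 with (1+1+1+1+1) by lra. rewrite !exp_plus.
  assert (H := exp_le_3). assert (H0 : 0 < exp 1) by apply exp_pos.
  assert (exp 1 * exp 1 <= 9) by nra.
  assert (exp 1 * exp 1 * exp 1 <= 27) by nra.
  assert (exp 1 * exp 1 * exp 1 * exp 1 <= 81) by nra.
  nra.
Qed.


Theorem theorem4 (Delta : nat -> nat)
  (H3 : exists N0, forall n, (N0 <= n)%nat -> (3 <= Delta n)%nat)
  (Hsmall : forall eps, eps > 0 -> exists N, forall n, (N <= n)%nat ->
              INR (Delta n) <= eps * sqrt (INR n)) :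
  exists c, c > 0 /\ exists N, forall n, (N <= n)%nat ->
    forall A : algo, reconstructs n (Delta n) A ->
      exists adj, admissible n (Delta n) adj /\
        INR (run_cost A (dist_oracle n adj))
          >= c * INR (Delta n) * INR n * ln (INR n) / ln (ln (INR n)).
Proof.
  destruct H3 as [N0 HN0].
  destruct (Hsmall (1/32)) as [N1 HN1]; [lra|].
  exists (1/960). split; [lra|]. exists (N0 + N1 + 1000)%nat.
  intros n Hn A HA.
  assert (HD3 : (3 <= Delta n)%nat) by (apply HN0; lia).
  assert (HDs : INR (Delta n) <= 1/32 * sqrt (INR n)) by (apply HN1; lia).
  destruct (main_nat3 n (Delta n) A) as [h [L [Q [F1 [F2 [F3 [F4 F5]]]]]]];
    [lia|exact HD3|exact HA|].
  set (D := Delta n) in *.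
  set (x := INR n) in *. set (d := INR D) in *. set (sq := sqrt x) in *.
  assert (Hx : 1000 <= x) by (unfold x; replace 1000 with (INR 1000);
    [apply le_INR; lia| simpl; lra]).
  assert (Hsq : sq * sq = x) by (apply sqrt_sqrt; lra).
  assert (Hsq0 : 0 <= sq) by apply sqrt_pos.
  assert (Hsq31 : 31 <= sq) by nra.
  assert (Hd : 3 <= d) by (unfold d; replace 3 with (INR 3) by (simpl; lra); apply le_INR; lia).
  assert (HdD1 : INR (D - 1) = d - 1) by (unfold d; rewrite minus_INR by lia; simpl; lra).
  set (H := INR h) in *.
  assert (HH0 : 0 <= H) by apply pos_INR.
  assert (R1 : x < 8 * (d - 1) * (H + 1)).
  { apply lt_INR in F1. rewrite !mult_INR, plus_INR, HdD1 in F1.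
    replace (INR 8) with 8 in F1 by (simpl; lra). simpl in F1. unfold x, H. exact F1. }
  assert (Hdsq : d <= sq / 32) by lra.
  assert (R2 : 8 * (d - 1) * (H + 1) <= sq / 4 * (H + 1)) by nra.
  assert (HHsq : 4 * sq < H + 1) by nra.
  assert (Hh1 : (1 <= h)%nat).
  { destruct h; [unfold H in HHsq; simpl in HHsq; lra|lia]. }
  destruct (F5 Hh1) as [adj [Hadm Hcost]].
  exists adj; split; [exact Hadm|].
  assert (Hlx5 : 5 <= ln x).
  { rewrite <- (ln_exp 5). apply ln_le'; [apply exp_pos|]. pose proof exp5; lra. }
  assert (Hlnx : ln x = 2 * ln sq).
  { rewrite <- Hsq, ln_mult by lra. ring. }
  assert (HlnH : ln sq <= ln H) by (apply ln_le'; lra).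
  set (lh := INR (Nat.log2 h)) in *.
  assert (Hlh : ln H < lh + 1).
  { destruct (Nat.log2_spec h ltac:(lia)) as [_ Hs].
    apply lt_INR in Hs. pose proof (ln_pow2_lt (Nat.log2 h) H ltac:(lra) Hs).
    pose proof ln2_lt1. pose proof ln_lt_2. assert (0 <= lh) by apply pos_INR.
    unfold lh in *. nra. }
  assert (Hlh4 : ln x / 4 <= lh) by lra.
  set (k := INR (Nat.log2 n)) in *.
  assert (Hk : k <= 2 * ln x).
  { destruct (Nat.log2_spec n ltac:(lia)) as [Hs _].
    apply le_INR in Hs. pose proof (ln_pow2_le (Nat.log2 n) x ltac:(lra) Hs).
    pose proof ln_lt_2. assert (0 <= k) by apply pos_INR. unfold k in *. nra. }
  set (l := INR L) in *.
  assert (Hl0 : 0 <= l) by apply pos_INR.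
  assert (Hl : l * ln 2 <= ln (2 * k + 2)).
  { destruct (Nat.log2_spec (2 * Nat.log2 n + 2) ltac:(lia)) as [Hs _].
    apply le_INR in Hs. rewrite plus_INR, mult_INR in Hs.
    replace (INR 2) with 2 in Hs by (simpl; lra). fold k in Hs.
    pose proof (ln_pow2_le _ (2 * k + 2) ltac:(unfold k; pose proof (pos_INR (Nat.log2 n)); lra) Hs).
    rewrite <- F2 in H0. exact H0. }
  assert (Hlnx0 : 0 < ln x) by lra.
  assert (Hl2 : ln (2 * k + 2) <= 2 * ln (ln x)).
  { replace (2 * ln (ln x)) with (ln (ln x * ln x)) by (rewrite ln_mult by lra; ring).
    apply ln_le'; [unfold k; pose proof (pos_INR (Nat.log2 n)); lra| nra]. }
  assert (HLL : 1 <= ln (ln x)).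
  { rewrite <- (ln_exp 1) at 1. apply ln_le'; [apply exp_pos|]. pose proof exp_le_3; lra. }
  assert (Hl4 : l + 1 <= 5 * ln (ln x)).
  { pose proof ln_lt_2. nra. }
  set (q := INR Q) in *.
  assert (Hq0 : 0 <= q) by apply pos_INR.
  assert (HX : H * (d - 1) * (d - 1) * lh < (q + 1) * (l + 1)).
  { apply lt_INR in F4. rewrite !mult_INR, !plus_INR, HdD1 in F4. simpl in F4.
    unfold H, q, l, lh. lra. }
  assert (HdH : d * x / 24 <= (d - 1) * (d - 1) * H).
  { assert (d * d <= x / 1024) by nra. nra. }
  assert (HX2 : d * x * ln x / 96 <= H * (d - 1) * (d - 1) * lh).
  { assert (0 <= d * x / 24) by nra. nra. }
  assert (HLLx : ln (ln x) < ln x) by (apply ln_lt_self; lra).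
  assert (Hfin : d * x * ln x <= 960 * ln (ln x) * q).
  { assert (d * x * ln x / 96 < (q + 1) * (5 * ln (ln x))) by nra.
    assert (960 * ln (ln x) <= d * x * ln x).
    { assert (3000 <= d * x) by nra.
      assert (0 <= (d * x - 960) * ln x) by (apply Rmult_le_pos; lra).
      nra. }
    nra. }
  apply Rle_ge. apply Rle_trans with q.
  - unfold Rdiv. apply Rmult_le_reg_r with (ln (ln x)); [lra|].
    rewrite Rmult_assoc, Rinv_l by lra. fold x d. lra.
  - apply le_INR; exact Hcost.
Qed.
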